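(* Let $I(x,y)=U(N(x),y)$ where $U$ is a disjunctive uninorm with neutral element $e\in\,]0,1[$ and $N$ is a continuous fuzzy negation. Then the pairs $(U^*,N^* )$, with $U^*$ a disjunctive uninorm with neutral element in $]0,1[$ and $N^*$ a continuous fuzzy negation, satisfying $I(x,y)=U^*(N^*(x),y)$ for all $x,y$, are exactly the pairs $$N^*=N_I^{\alpha},\qquad U^*(x,y)=I(\mathfrak{R}_{N_I^{\alpha}}(x),y)\quad(x,y\in[0,1]),$$ where $\alpha\in\,]0,1[$ is such that the horizontal cut $N_I^\alpha=I(\cdot,\alpha)$ is a continuous fuzzy negation (and then $\alpha$ is the neutral element of $U^*$). In particular $\alpha=e$ fulfills this condition, and the representation of $I$ is unique if and only if $I(\cdot,e)$ is the only horizontal cut $I(\cdot,\alpha)$, $\alpha\in\,]0,1[$, which is a continuous fuzzy negation.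
   Context: A fuzzy negation is a non-increasing map $N:[0,1]\to[0,1]$ with $N(0)=1$, $N(1)=0$. A uninorm is a map $U:[0,1]^2\to[0,1]$ that is commutative, associative, non-decreasing in each variable, and has a neutral element $e\in[0,1]$. A uninorm is disjunctive if $U(1,0)=1$. For $\alpha\in[0,1[$, $N_I^\alpha(x)=I(x,\alpha)$. For a fuzzy negation $M$, the modified pseudo-inverse is $\mathfrak{R}_M(0)=1$ and $\mathfrak{R}_M(x)=\sup\{y\in[0,1]: M(y)>x\}$ for $x\in\,]0,1]$. *)

(* Defs.v *)
From Stdlib Require Import Reals.
From Coquelicot Require Import Coquelicot.
Open Scope R_scope.

(* Functions are R -> R (resp. R -> R -> R); only their values on [0,1]
   (resp. [0,1]^2) are relevant. *)
Definition in01 (x : R) : Prop := 0 <= x <= 1.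

Definition fuzzy_negation (N : R -> R) : Prop :=
  (forall x, in01 x -> in01 (N x)) /\
  (forall x y, in01 x -> in01 y -> x <= y -> N y <= N x) /\
  N 0 = 1 /\ N 1 = 0.

Definition continuous01 (N : R -> R) : Prop :=
  forall x, in01 x -> forall eps, 0 < eps -> exists delta, 0 < delta /\
    forall y, in01 y -> Rabs (y - x) < delta -> Rabs (N y - N x) < eps.

Definition cont_fuzzy_negation (N : R -> R) : Prop :=
  fuzzy_negation N /\ continuous01 N.

Definition uninorm (U : R -> R -> R) (e : R) : Prop :=
  in01 e /\
  (forall x y, in01 x -> in01 y -> in01 (U x y)) /\
  (forall x y, in01 x -> in01 y -> U x y = U y x) /\
  (forall x y z, in01 x -> in01 y -> in01 z -> U x (U y z) = U (U x y) z) /\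
  (forall x x' y, in01 x -> in01 x' -> in01 y -> x <= x' -> U x y <= U x' y) /\
  (forall x y y', in01 x -> in01 y -> in01 y' -> y <= y' -> U x y <= U x y') /\
  (forall x, in01 x -> U e x = x).

Definition disjunctive (U : R -> R -> R) : Prop := U 1 0 = 1.

Definition hcut (I : R -> R -> R) (alpha : R) : R -> R := fun x => I x alpha.

(* modified pseudo-inverse: R_M(0) = 1, R_M(x) = sup {y in [0,1] | M y > x}
   for x in ]0,1]; an empty set gives 0 (real m_infty = 0). *)
Definition mod_pseudo_inv (M : R -> R) (x : R) : R :=
  if Req_EM_T x 0 then 1
  else real (Lub_Rbar (fun y => 0 <= y <= 1 /\ x < M y)).

Definition represents (I : R -> R -> R) (U' : R -> R -> R) (N' : R -> R) : Prop :=
  forall x y, in01 x -> in01 y -> I x y = U' (N' x) y.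

Definition admissible_pair (U' : R -> R -> R) (e' : R) (N' : R -> R) : Prop :=
  0 < e' < 1 /\ uninorm U' e' /\ disjunctive U' /\ cont_fuzzy_negation N'.

(* Main.v *)
Require Import Defs.
From Stdlib Require Import Reals Lra Classical.
From Coquelicot Require Import Coquelicot.
Open Scope R_scope.

Lemma cfn_ext (F G : R -> R) : cont_fuzzy_negation G -> (forall x, in01 x -> F x = G x) -> cont_fuzzy_negation F.
Proof.
  intros [[H1 [H2 [H3 H4]]] Hc] E.
  assert (E0: in01 0) by (unfold in01; lra). assert (E1: in01 1) by (unfold in01; lra).
  split; [split; [|split; [|split]]|].
  - intros x hx. rewrite E by exact hx. auto.
  - intros x y hx hy hxy. rewrite !E by assumption. auto.
  - rewrite E by exact E0; auto.
  - rewrite E by exact E1; auto.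
  - intros x hx eps he. destruct (Hc x hx eps he) as [d [hd Hd]]. exists d; split; auto.
    intros y hy hyx. rewrite !E by assumption. auto.
Qed.

Lemma R_prop (M : R -> R) : cont_fuzzy_negation M -> forall x, in01 x ->
  in01 (mod_pseudo_inv M x) /\ M (mod_pseudo_inv M x) = x.
Proof.
  intros [[H1 [H2 [H3 H4]]] Hc] x hx.
  unfold mod_pseudo_inv. destruct (Req_EM_T x 0) as [->|hx0].
  - split; [unfold in01; lra | exact H4].
  - set (E := fun y => 0 <= y <= 1 /\ x < M y).
    destruct (Lub_Rbar_correct E) as [Hub Hlub].
    destruct (Req_dec x 1) as [->|hx1].
    + assert (Hm: Lub_Rbar E = m_infty).
      { assert (H: Rbar_le (Lub_Rbar E) m_infty).
        { apply Hlub. intros y [hy hy'].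
          exfalso. assert (H: in01 y) by (unfold in01; lra). specialize (H1 y H). unfold in01 in H1. lra. }
        destruct (Lub_Rbar E); simpl in H; try contradiction; auto. }
      rewrite Hm. simpl. split; [unfold in01; lra| exact H3].
    + assert (hxx: 0 < x < 1) by (unfold in01 in hx; lra).
      assert (E0 : E 0) by (unfold E; rewrite H3; lra).
      assert (Hl1 : Rbar_le (Lub_Rbar E) 1).
      { apply Hlub. intros y [hy _]. simpl. lra. }
      assert (Hl0 := Hub 0 E0).
      destruct (Lub_Rbar E) as [s| |] eqn:Hs; simpl in Hl1, Hl0; try contradiction.
      simpl.
      assert (hs : in01 s) by (unfold in01; lra).
      split; [exact hs|].
      destruct (Rtotal_order (M s) x) as [lt|[eq|gt]]; [exfalso| exact eq | exfalso].
      * destruct (Hc s hs (x - M s)) as [d [hd Hd]]; [lra|].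
        destruct (classic (exists y, E y /\ s - d < y)) as [[y [Ey hy]]|Hn].
        -- assert (hys := Hub y Ey). simpl in hys.
           destruct Ey as [hy01 hMy].
           assert (Hr : Rabs (y - s) < d) by (apply Rabs_def1; lra).
           specialize (Hd y hy01 Hr). apply Rabs_def2 in Hd. lra.
        -- assert (Hb : Rbar_le s (s - d)).
           { apply Hlub. intros y Ey. simpl. destruct (Rle_dec y (s - d)) as [h|h]; auto.
             exfalso. apply Hn. exists y. split; auto. lra. }
           simpl in Hb. lra.
      * assert (s1 : s < 1).
        { destruct (Req_dec s 1) as [->|h]; [rewrite H4 in gt; lra| unfold in01 in hs; lra]. }
        destruct (Hc s hs (M s - x)) as [d [hd Hd]]; [lra|].
        set (y := Rmin (s + d/2) 1).
        assert (hy1 : y <= 1) by apply Rmin_r.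
        assert (hy2 : y <= s + d/2) by apply Rmin_l.
        assert (hy3 : s < y).
        { unfold y. apply Rmin_case; lra. }
        assert (hy01 : in01 y) by (unfold in01 in *; lra).
        assert (Hr : Rabs (y - s) < d) by (apply Rabs_def1; lra).
        specialize (Hd y hy01 Hr). apply Rabs_def2 in Hd.
        assert (Ey : E y) by (unfold E; unfold in01 in hy01; split; [lra|lra]).
        assert (hys := Hub y Ey). simpl in hys. lra.
Qed.

Lemma key (U : R -> R -> R) e alpha t : uninorm U e -> in01 alpha -> in01 t -> U t alpha = e ->
  forall a b, in01 a -> in01 b -> U a alpha = U b alpha -> forall y, in01 y -> U a y = U b y.
Proof.
  intros [He [Hr [Hcm [Has [Hm1 [Hm2 Hn]]]]]] ha ht Hte.
  assert (G: forall a y, in01 a -> in01 y -> U a y = U (U a alpha) (U t y)).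
  { intros a y h1 h2. rewrite <- (Hn y h2) at 1. rewrite <- Hte.
    rewrite (Hcm t alpha) by auto. rewrite <- (Has alpha t y) by auto.
    rewrite (Has a alpha) by auto. reflexivity. }
  intros a b h1 h2 Hab y hy. rewrite (G a y), (G b y) by auto. rewrite Hab. reflexivity.
Qed.

Lemma part1 (I U' : R -> R -> R) e' N' : admissible_pair U' e' N' -> represents I U' N' ->
  cont_fuzzy_negation (hcut I e') /\ (forall x, in01 x -> N' x = hcut I e' x) /\
  (forall x y, in01 x -> in01 y -> U' x y = I (mod_pseudo_inv (hcut I e') x) y).
Proof.
  intros [_ [[He [Hr [Hcm [Has [Hm1 [Hm2 Hn]]]]]] [_ HN]]] HI.
  assert (HN1 : forall x, in01 x -> in01 (N' x)) by (destruct HN as [[h _] _]; exact h).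
  assert (Heq : forall x, in01 x -> hcut I e' x = N' x).
  { intros x hx. unfold hcut. rewrite HI by auto. rewrite Hcm by auto. apply Hn; auto. }
  assert (Hc : cont_fuzzy_negation (hcut I e')) by (apply (cfn_ext _ N'); auto).
  split; [exact Hc|split].
  - intros x hx. symmetry; auto.
  - intros x y hx hy. destruct (R_prop _ Hc x hx) as [h1 h2].
    rewrite HI by auto. rewrite <- Heq by auto. rewrite h2. reflexivity.
Qed.

Lemma part2 (U : R -> R -> R) e (N : R -> R) alpha :
  uninorm U e -> disjunctive U -> cont_fuzzy_negation N -> 0 < alpha < 1 ->
  cont_fuzzy_negation (hcut (fun x y => U (N x) y) alpha) ->
  admissible_pair (fun x y => (fun x y => U (N x) y) (mod_pseudo_inv (hcut (fun x y => U (N x) y) alpha) x) y) alpha (hcut (fun x y => U (N x) y) alpha) /\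
  represents (fun x y => U (N x) y) (fun x y => (fun x y => U (N x) y) (mod_pseudo_inv (hcut (fun x y => U (N x) y) alpha) x) y) (hcut (fun x y => U (N x) y) alpha).
Proof.
  intros HU Hd HN Ha HM.
  set (M := hcut (fun x y => U (N x) y) alpha) in *.
  set (phi := fun x => N (mod_pseudo_inv M x)).
  pose proof HU as [He [Hr [Hcm [Has [Hm1 [Hm2 Hn]]]]]].
  assert (HN1 : forall x, in01 x -> in01 (N x)) by (destruct HN as [[h _] _]; exact h).
  assert (hal : in01 alpha) by (unfold in01; lra).
  assert (Hphi : forall x, in01 x -> in01 (phi x)).
  { intros x hx. apply HN1. apply (R_prop _ HM x hx). }
  assert (Hsec : forall x, in01 x -> U (phi x) alpha = x).
  { intros x hx. apply (R_prop _ HM x hx). }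
  assert (K : forall a b, in01 a -> in01 b -> U a alpha = U b alpha -> forall y, in01 y -> U a y = U b y).
  { apply (key U e alpha (phi e) HU hal); auto. }
  assert (HM1 : forall x, in01 x -> in01 (M x)) by (destruct HM as [[h _] _]; exact h).
  assert (I0 : in01 0) by (unfold in01; lra). assert (I1 : in01 1) by (unfold in01; lra).
  cbv beta. fold (phi).
  change (fun x y => U (N (mod_pseudo_inv M x)) y) with (fun x y => U (phi x) y).
  split.
  - split; [exact Ha|split; [|split; [|exact HM]]].
    + split; [exact hal|split; [|split; [|split; [|split; [|split]]]]].
      * intros x y hx hy; auto.
      * intros x y hx hy.
        transitivity (U (phi x) (U (phi y) alpha)). { rewrite Hsec by auto; reflexivity. }
        rewrite Has by auto. rewrite (Hcm (phi x)) by auto. rewrite <- Has by auto.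
        rewrite Hsec by auto. reflexivity.
      * intros x y z hx hy hz.
        assert (hxy : in01 (U (phi x) y)) by auto.
        symmetry. rewrite (K (phi (U (phi x) y)) (U (phi x) (phi y))); auto.
        -- rewrite Has by auto. reflexivity.
        -- rewrite Hsec by auto. rewrite <- Has by auto. rewrite Hsec by auto. reflexivity.
      * intros x x' y hx hx' hy hxx.
        destruct (Req_dec x x') as [<-|hne]; [lra|].
        apply Hm1; auto.
        destruct (Rle_lt_dec (phi x) (phi x')) as [h|h]; auto.
        assert (U (phi x') alpha <= U (phi x) alpha) by (apply Hm1; auto; lra).
        rewrite !Hsec in H by auto. lra.
      * intros x y y' hx hy hy' h. apply Hm2; auto.
      * intros x hx. rewrite (K (phi alpha) e); auto. rewrite Hsec by auto. symmetry; auto.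
    + unfold disjunctive. rewrite (K (phi 1) 1); auto.
      rewrite Hsec by auto.
      assert (U 1 0 <= U 1 alpha) by (apply Hm2; auto; lra).
      assert (h := Hr 1 alpha I1 hal). unfold disjunctive in Hd. unfold in01 in h. lra.
  - intros x y hx hy. apply K; auto.
    rewrite Hsec by auto. reflexivity.
Qed.

Theorem mainTheorem5 (U : R -> R -> R) (e : R) (N : R -> R) :
  0 < e < 1 -> uninorm U e -> disjunctive U -> cont_fuzzy_negation N ->
  let I := fun x y => U (N x) y in
  (forall (U' : R -> R -> R) (e' : R) (N' : R -> R),
     admissible_pair U' e' N' -> represents I U' N' ->
     cont_fuzzy_negation (hcut I e') /\
     (forall x, in01 x -> N' x = hcut I e' x) /\
     (forall x y, in01 x -> in01 y ->
        U' x y = I (mod_pseudo_inv (hcut I e') x) y)) /\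
  (forall alpha, 0 < alpha < 1 -> cont_fuzzy_negation (hcut I alpha) ->
     admissible_pair (fun x y => I (mod_pseudo_inv (hcut I alpha) x) y) alpha
                     (hcut I alpha) /\
     represents I (fun x y => I (mod_pseudo_inv (hcut I alpha) x) y) (hcut I alpha)) /\
  cont_fuzzy_negation (hcut I e) /\
  ((forall (U1 : R -> R -> R) (e1 : R) (N1 : R -> R)
           (U2 : R -> R -> R) (e2 : R) (N2 : R -> R),
      admissible_pair U1 e1 N1 -> represents I U1 N1 ->
      admissible_pair U2 e2 N2 -> represents I U2 N2 ->
      (forall x, in01 x -> N1 x = N2 x) /\
      (forall x y, in01 x -> in01 y -> U1 x y = U2 x y))
   <->
   (forall alpha, 0 < alpha < 1 -> cont_fuzzy_negation (hcut I alpha) -> alpha = e)).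
Proof.
  intros He HU Hd HN I.
  pose proof HU as [He' [Hr [Hcm [Has [Hm1 [Hm2 Hn]]]]]].
  assert (HN1 : forall x, in01 x -> in01 (N x)) by (destruct HN as [[h _] _]; exact h).
  assert (P3 : cont_fuzzy_negation (hcut I e)).
  { apply (cfn_ext _ N HN). intros x hx. unfold hcut, I. rewrite Hcm by auto. apply Hn; auto. }
  assert (P2 : forall alpha, 0 < alpha < 1 -> cont_fuzzy_negation (hcut I alpha) ->
     admissible_pair (fun x y => I (mod_pseudo_inv (hcut I alpha) x) y) alpha
                     (hcut I alpha) /\
     represents I (fun x y => I (mod_pseudo_inv (hcut I alpha) x) y) (hcut I alpha)).
  { intros alpha Ha HM. exact (part2 U e N alpha HU Hd HN Ha HM). }
  split; [intros; apply part1; auto|split; [exact P2|split; [exact P3|split]]].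
  - intros Hu alpha Ha HM.
    destruct (P2 alpha Ha HM) as [A1 R1]. destruct (P2 e He P3) as [A2 R2].
    destruct (Hu _ _ _ _ _ _ A1 R1 A2 R2) as [_ HUeq].
    destruct A1 as [_ [[ha [_ [Hc1 [_ [_ [_ Hn1]]]]]] _]].
    destruct A2 as [_ [[_ [_ [_ [_ [_ [_ Hn2]]]]]] _]].
    assert (h1 := Hn1 e He'). rewrite Hc1 in h1 by auto.
    rewrite HUeq in h1 by auto. rewrite Hn2 in h1 by auto. exact h1.
  - intros Hu U1 e1 N1 U2 e2 N2 A1 R1 A2 R2.
    destruct (part1 I U1 e1 N1 A1 R1) as [C1 [E1 F1]].
    destruct (part1 I U2 e2 N2 A2 R2) as [C2 [E2 F2]].
    assert (q1 : e1 = e) by (apply Hu; [apply A1|exact C1]).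
    assert (q2 : e2 = e) by (apply Hu; [apply A2|exact C2]).
    subst e1 e2. split.
    + intros x hx. rewrite E1, E2 by auto. reflexivity.
    + intros x y hx hy. rewrite F1, F2 by auto. reflexivity.
Qed.
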